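(* Let $M$ be a positive integer and let $K$ be an integer with $q_{KL}-1\le K\le M$. Then \[\mathcal U(M)\cap\mathcal U(K)=(1,K+1]\cap\mathcal U(M).\]
   Context: For a positive integer $J$, $\mathcal U(J)$ is the set of $q\in(1,J+1]$ such that $1$ has exactly one expansion $1=\sum_{i\ge1}d_iq^{-i}$ with $d_i\in\{0,1,\dots,J\}$. For $q\in(1,M+1]$, $\alpha(q)$ is the quasi-greedy $q$-expansion of $1$ over $\{0,1,\dots,M\}$ (lexicographically largest sequence not ending in $0^\infty$ with $\sum a_iq^{-i}=1$). Let $(\tau_i)_{i\ge0}$ be the Thue–Morse sequence; $q_{KL}=q_{KL}(M)$ is the base with $\alpha(q_{KL})=\lambda_1\lambda_2\dots$, $\lambda_i=k+\tau_i-\tau_{i-1}$ if $M=2k$, $\lambda_i=k+\tau_i$ if $M=2k+1$. *)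

(* Defs.v *)
From Stdlib Require Import Reals Arith.
Open Scope R_scope.

(* Digit sequences are d : nat -> nat, with d j standing for the paper's d_(j+1),
   so that sum_(i>=1) d_i q^(-i) = sum_(j>=0) d j / q^(j+1). *)

Definition is_expansion (J : nat) (q : R) (d : nat -> nat) : Prop :=
  (forall j, (d j <= J)%nat) /\
  infinite_sum (fun j => INR (d j) / q ^ (S j)) 1.

Definition U (J : nat) (q : R) : Prop :=
  1 < q <= INR J + 1 /\
  (exists d, is_expansion J q d) /\
  (forall d1 d2, is_expansion J q d1 -> is_expansion J q d2 -> forall j, d1 j = d2 j).

Definition lex_le (b a : nat -> nat) : Prop :=
  (forall j, b j = a j) \/
  (exists n, (forall i, (i < n)%nat -> b i = a i) /\ (b n < a n)%nat).

Definition not_ending_zero (a : nat -> nat) : Prop :=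
  forall N, exists n, (N <= n)%nat /\ a n <> 0%nat.

Definition is_quasi_greedy (M : nat) (q : R) (a : nat -> nat) : Prop :=
  is_expansion M q a /\ not_ending_zero a /\
  (forall b, is_expansion M q b -> not_ending_zero b -> lex_le b a).

Fixpoint popc (fuel n : nat) : nat :=
  match fuel with
  | O => O
  | S f => if Nat.eqb n 0 then O else (n mod 2 + popc f (n / 2))%nat
  end.
Definition tau (n : nat) : nat := (popc n n mod 2)%nat.

(* lambda_i (i >= 1), stored as lam M j = lambda_(j+1) *)
Definition lam (M : nat) (j : nat) : nat :=
  if Nat.even M then (M / 2 + tau (S j) - tau j)%nat
  else (M / 2 + tau (S j))%nat.

(* Main.v *)
Require Import Defs.
From Stdlib Require Import Reals Arith Lra Lia ClassicalEpsilon.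
From Coquelicot Require Import Coquelicot.
Open Scope R_scope.

Definition tl (q : R) (e : nat -> nat) (n : nat) : nat -> R :=
  fun j => INR (e (n + j)%nat) / q ^ (S j).

Lemma tl_eq q e n k : q <> 0 -> tl q e n (S k) = / q * tl q e (S n) k.
Proof.
  intro Hq. unfold tl. rewrite Nat.add_succ_r. simpl.
  assert (q ^ k <> 0) by (apply pow_nonzero; auto). field; auto.
Qed.

Lemma is_series_eq (a : nat -> R) (l l' : R) : l = l' -> is_series a l -> is_series a l'.
Proof. intros ->; auto. Qed.

Lemma is_series_scalR (c : R) (a : nat -> R) (l : R) : is_series a l -> is_series (fun n => c * a n) (c * l).
Proof. intro H. exact (@is_series_scal R_AbsRing R_NormedModule c _ _ H). Qed.

Lemma is_series_decr_1R (a : nat -> R) (l : R) : is_series (fun k => a (S k)) (l - a O) -> is_series a l.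
Proof. intro H. apply is_series_decr_1. exact H. Qed.

Lemma is_series_incr_1R (a : nat -> R) (l : R) : is_series a l -> is_series (fun k => a (S k)) (l - a O).
Proof. intro H. apply is_series_incr_1. apply (is_series_eq _ l); auto.
  unfold plus; simpl. ring. Qed.

Lemma shift_back (q : R) e n (y : R) : q <> 0 -> is_series (tl q e (S n)) y ->
  is_series (tl q e n) ((INR (e n) + y) / q).
Proof.
  intros Hq H. apply is_series_decr_1R.
  apply (is_series_ext (fun k => / q * (tl q e (S n) k))).
  { intro k. rewrite tl_eq; auto. }
  apply (is_series_eq _ (/ q * y)). 2: apply is_series_scalR; auto.
  unfold tl. rewrite Nat.add_0_r. simpl. field; auto.
Qed.

Lemma shift_fwd (q : R) e n (l : R) : q <> 0 -> is_series (tl q e n) l ->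
  is_series (tl q e (S n)) (q * l - INR (e n)).
Proof.
  intros Hq H.
  apply is_series_incr_1R in H. apply (is_series_scalR q) in H.
  eapply is_series_ext; [|eapply is_series_eq; [|exact H]].
  intro k. cbv beta. rewrite (tl_eq q e n k Hq). rewrite <- Rmult_assoc, Rinv_r, Rmult_1_l; auto.
  unfold tl. rewrite Nat.add_0_r. simpl. field; auto.
Qed.

Lemma descend (q : R) (e d : nat -> nat) (T : nat -> R) :
  q <> 0 -> (forall j, T j = (INR (d j) + T (S j)) / q) ->
  forall k, (forall j, (j < k)%nat -> e j = d j) ->
  is_series (tl q e k) (T k) -> is_series (tl q e 0) (T O).
Proof.
  intros Hq HT k. induction k as [|k IH]; intros He Hs; auto.
  apply IH. intros; apply He; lia.
  rewrite HT. rewrite <- (He k) by lia. apply shift_back; auto.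
Qed.

Lemma floor_ex (n : nat) (y : R) : 0 <= y < INR n ->
  exists k, (k < n)%nat /\ INR k <= y < INR k + 1.
Proof.
  induction n as [|n IH]; intros [H0 H1].
  - simpl in H1; lra.
  - destruct (Rlt_le_dec y (INR n)) as [Hl|Hl].
    + destruct IH as [k [Hk1 Hk2]]; [lra|]. exists k; split; [lia|auto].
    + exists n; split; [lia|]. rewrite S_INR in H1. lra.
Qed.

Definition Bnd (M : nat) (q : R) := INR M / (q - 1).

Lemma digit_ex (M : nat) (q r : R) : 1 < q -> q - 1 <= INR M ->
  0 <= r <= Bnd M q -> exists k, (k <= M)%nat /\ 0 <= q * r - INR k <= Bnd M q.
Proof.
  intros Hq HM Hr. unfold Bnd in *.
  assert (HB : INR M / (q - 1) * (q - 1) = INR M) by (field; lra).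
  assert (HB1 : 1 <= INR M / (q - 1)) by nra.
  destruct (Rle_lt_dec (INR M) (q * r)) as [Hl|Hl].
  - exists M; split; [lia|]. split; [lra|]. nra.
  - destruct (floor_ex M (q * r)) as [k [Hk1 Hk2]]; [split; nra|].
    exists k; split; [lia|]. lra.
Qed.

Definition dig (M : nat) (q r : R) : nat :=
  epsilon (inhabits 0%nat) (fun k => (k <= M)%nat /\ 0 <= q * r - INR k <= Bnd M q).

Fixpoint rem (M : nat) (q x : R) (n : nat) : R :=
  match n with
  | O => x
  | S n => q * rem M q x n - INR (dig M q (rem M q x n))
  end.

Lemma greedy (M : nat) (q x : R) : 1 < q -> q - 1 <= INR M ->
  0 <= x <= Bnd M q ->
  exists g, (forall j, (g j <= M)%nat) /\ is_series (tl q g 0) x.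
Proof.
  intros Hq HM Hx.
  assert (Hinv : forall n, 0 <= rem M q x n <= Bnd M q /\
     ((dig M q (rem M q x n) <= M)%nat /\ 0 <= q * rem M q x n - INR (dig M q (rem M q x n)) <= Bnd M q)).
  { induction n as [|n IH].
    - split; auto. unfold dig. apply epsilon_spec.
      apply digit_ex; auto.
    - destruct IH as [_ [_ H2]]. simpl. split; auto.
      unfold dig. apply epsilon_spec.
      apply digit_ex; auto. }
  exists (fun n => dig M q (rem M q x n)). split.
  { intro j. apply Hinv. }
  assert (Hq0 : q <> 0) by lra.
  assert (Hps : forall n, sum_f_R0 (tl q (fun n => dig M q (rem M q x n)) 0) n
                = x - rem M q x (S n) / q ^ (S n)).
  { induction n as [|n IH].
    - simpl. unfold tl. simpl. field; auto.
    - simpl sum_f_R0. rewrite IH. unfold tl. simpl (0 + S n)%nat.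
      change (rem M q x (S (S n))) with (q * rem M q x (S n) - INR (dig M q (rem M q x (S n)))).
      assert (q ^ S n <> 0) by (apply pow_nonzero; auto).
      assert (q ^ n <> 0) by (apply pow_nonzero; auto). simpl pow. field; repeat split; auto. }
  apply is_series_Reals. intros eps Heps.
  set (B := Bnd M q).
  assert (HB0 : 0 <= B) by (destruct (Hinv O) as [[? ?] _]; unfold B; lra).
  destruct (pow_lt_1_zero (/ q)) with (y := eps / (B + 1)) as [N HN].
  { rewrite Rabs_pos_eq. apply (Rmult_lt_reg_l q); [lra|]. rewrite Rinv_r; lra. left; apply Rinv_0_lt_compat; lra. }
  { apply Rdiv_lt_0_compat; lra. }
  exists N. intros n Hn. unfold R_dist. rewrite Hps.
  specialize (HN (S n) ltac:(lia)).
  rewrite pow_inv in HN.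
  assert (Hp : 0 < q ^ S n) by (apply pow_lt; lra).
  assert (Hip : 0 < / q ^ S n) by (apply Rinv_0_lt_compat; auto).
  rewrite Rabs_pos_eq in HN by lra.
  destruct (Hinv (S n)) as [[Hr1 Hr2] _].
  replace (x - rem M q x (S n) / q ^ S n - x) with (- (rem M q x (S n) * / q ^ S n)) by (field; lra).
  rewrite Rabs_Ropp, Rabs_pos_eq by (apply Rmult_le_pos; lra).
  apply Rle_lt_trans with (B * / q ^ S n). apply Rmult_le_compat_r; [lra| unfold B; lra].
  apply Rle_lt_trans with ((B + 1) * / q ^ S n). nra.
  apply Rmult_lt_reg_l with (/ (B + 1)). apply Rinv_0_lt_compat; lra.
  rewrite <- Rmult_assoc, Rinv_l, Rmult_1_l by lra.
  unfold Rdiv in HN. lra.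
Qed.

Fixpoint Tf (q : R) (d : nat -> nat) (n : nat) : R :=
  match n with
  | O => 1
  | S n => q * Tf q d n - INR (d n)
  end.

Lemma geom_M (M : nat) (q : R) : 1 < q ->
  is_series (fun j => INR M / q ^ (S j)) (Bnd M q).
Proof.
  intro Hq.
  assert (H := is_series_geom (/ q)).
  assert (Hr : Rabs (/ q) < 1).
  { rewrite Rabs_pos_eq. apply (Rmult_lt_reg_l q); [lra|]. rewrite Rinv_r; lra.
    left; apply Rinv_0_lt_compat; lra. }
  specialize (H Hr). apply (is_series_scalR (INR M / q)) in H.
  eapply is_series_ext; [|eapply is_series_eq; [|exact H]].
  - intro j. cbv beta. rewrite pow_inv. simpl.
    assert (q ^ j <> 0) by (apply pow_nonzero; lra). field; repeat split; try lra; auto.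
  - unfold Bnd. field. split; lra.
Qed.

Lemma key (M K : nat) (q : R) (d : nat -> nat) :
  1 < q -> q <= INR K + 1 -> (K <= M)%nat -> is_expansion M q d ->
  (forall d1 d2, is_expansion M q d1 -> is_expansion M q d2 -> forall j, d1 j = d2 j) ->
  forall n, (d n <= K)%nat.
Proof.
  intros Hq HqK HKM [Hdb Hds] Huniq.
  assert (Hq0 : q <> 0) by lra.
  assert (HKR : INR K <= INR M) by (apply le_INR; auto).
  assert (HqM : q - 1 <= INR M) by lra.
  assert (HB1 : 1 <= Bnd M q).
  { unfold Bnd. assert (HB : INR M / (q - 1) * (q - 1) = INR M) by (field; lra). nra. }
  assert (hs : is_series (tl q d 0) 1).
  { apply is_series_Reals in Hds. exact Hds. }
  assert (HT : forall n, is_series (tl q d n) (Tf q d n)).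
  { induction n as [|n IH]; auto. simpl. apply shift_fwd; auto. }
  assert (Hrel : forall n, Tf q d n = (INR (d n) + Tf q d (S n)) / q).
  { intro n. simpl. field; auto. }
  assert (Hpos : forall n, 0 <= Tf q d n).
  { intro n. rewrite <- (is_series_unique _ _ (HT n)).
    assert (H0 := is_series_scalR 0 _ _ (HT n)).
    rewrite Rmult_0_l in H0.
    rewrite <- (is_series_unique _ _ H0).
    apply Series_le.
    - intro j. split; [lra|]. rewrite Rmult_0_l. unfold tl.
      apply Rmult_le_pos; [apply pos_INR|]. left; apply Rinv_0_lt_compat, pow_lt; lra.
    - eexists; exact (HT n). }
  assert (Hub : forall n, Tf q d n <= Bnd M q).
  { intro n. rewrite <- (is_series_unique _ _ (HT n)).
    rewrite <- (is_series_unique _ _ (geom_M M q Hq)).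
    apply Series_le.
    - intro j. unfold tl. assert (0 < / q ^ S j) by (apply Rinv_0_lt_compat, pow_lt; lra).
      split. apply Rmult_le_pos; [apply pos_INR|lra].
      apply Rmult_le_compat_r; [lra|]. apply le_INR; auto.
    - eexists; exact (geom_M M q Hq). }
  assert (Hexp : forall e, (forall j, (e j <= M)%nat) -> is_series (tl q e 0) 1 -> is_expansion M q e).
  { intros e He Hs. split; auto. apply is_series_Reals. exact Hs. }
  assert (Hmain : forall n, ~ (K < d n)%nat).
  { induction n as [|m IH]; intro Hlt.
    - assert (HdK : INR K + 1 <= INR (d O)).
      { rewrite <- S_INR. apply le_INR. lia. }
      assert (HT1 : Tf q d 1 = q - INR (d O)) by (simpl; ring).
      assert (H1 := Hpos 1%nat).
      destruct (greedy M q (Tf q d 1 + 1) Hq HqM) as [g [Hg Hgs]]; [lra|].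
      set (e := fun j => match j with O => (d O - 1)%nat | S i => g i end).
      assert (Hes : is_series (tl q e 1) (Tf q d 1 + 1)).
      { eapply is_series_ext; [|exact Hgs]. intro j. reflexivity. }
      apply shift_back in Hes; auto.
      assert (Hee : is_expansion M q e).
      { apply Hexp.
        - intros [|j]; simpl; [specialize (Hdb O); lia|apply Hg].
        - eapply is_series_eq; [|exact Hes]. simpl (e O).
          rewrite minus_INR by lia. replace (INR 1) with 1 by reflexivity.
          assert (E := Hrel O). simpl Tf in E at 1.
          replace (INR (d O) - 1 + (Tf q d 1 + 1)) with (INR (d O) + Tf q d 1) by ring.
          symmetry; exact E. }
      specialize (Huniq _ _ Hee (conj Hdb Hds) O). simpl in Huniq. lia.
    - destruct (le_lt_dec (d m) K) as [Hdm|Hdm]; [|apply IH; exact Hdm].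
      assert (HdM := Hdb (S m)).
      assert (HdK : INR K + 1 <= INR (d (S m))).
      { rewrite <- S_INR. apply le_INR. lia. }
      assert (HT1 : 1 <= Tf q d (S m)).
      { assert (E := Hrel (S m)). assert (P := Hpos (S (S m))).
        assert (E2 : Tf q d (S m) * q = INR (d (S m)) + Tf q d (S (S m))) by (rewrite E; field; auto).
        nra. }
      assert (Hu := Hub (S m)).
      destruct (greedy M q (Tf q d (S m) - 1) Hq HqM) as [g [Hg Hgs]]; [lra|].
      set (e := fun j => if (j <? m)%nat then d j else if (j =? m)%nat then S (d m) else g (j - S m)%nat).
      assert (Hes : is_series (tl q e (S m)) (Tf q d (S m) - 1)).
      { eapply is_series_ext; [|exact Hgs]. intro j. unfold tl, e. simpl (0 + j)%nat.
        destruct (Nat.ltb_spec (S m + j) m); [lia|].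
        destruct (Nat.eqb_spec (S m + j) m); [lia|].
        replace (S m + j - S m)%nat with j by lia. reflexivity. }
      apply shift_back in Hes; auto.
      assert (Hem : e m = S (d m)).
      { unfold e. rewrite Nat.ltb_irrefl, Nat.eqb_refl. reflexivity. }
      rewrite Hem in Hes.
      assert (Hes2 : is_series (tl q e m) (Tf q d m)).
      { eapply is_series_eq; [|exact Hes]. rewrite (Hrel m), S_INR. field; auto. }
      assert (Hes0 := descend q e d (Tf q d) Hq0 Hrel m).
      assert (Hee : is_expansion M q e).
      { apply Hexp.
        - intro j. unfold e. destruct (Nat.ltb_spec j m); [apply Hdb|].
          destruct (Nat.eqb_spec j m); [lia|apply Hg].
        - apply Hes0; auto. intros j Hj. unfold e.
          destruct (Nat.ltb_spec j m); [reflexivity|lia]. }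
      specialize (Huniq _ _ Hee (conj Hdb Hds) m). lia. }
  intro n. specialize (Hmain n). lia.
Qed.

Theorem lemma7p2 (M K : nat) (qKL : R) :
  (0 < M)%nat ->
  1 < qKL <= INR M + 1 ->
  is_quasi_greedy M qKL (lam M) ->
  qKL - 1 <= INR K -> (K <= M)%nat ->
  forall q : R, (U M q /\ U K q) <-> ((1 < q <= INR K + 1) /\ U M q).
Proof.
  intros _ _ _ _ HKM q. split.
  - intros [HM [HK _]]. split; auto.
  - intros [Hq HM]. split; auto.
    destruct HM as [HqM [[d Hd] Huniq]].
    assert (Hdk := key M K q d (proj1 Hq) (proj2 Hq) HKM Hd Huniq).
    split; [exact Hq|]. split.
    + exists d. split; [exact Hdk|]. apply Hd.
    + intros d1 d2 [H1a H1b] [H2a H2b]. apply Huniq.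
      * split; auto. intro j. specialize (H1a j). lia.
      * split; auto. intro j. specialize (H2a j). lia.
Qed.
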